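(* Let $S$ be a numerical semigroup with minimal generating set $P$, $D=S^*+S^*$, $X$ its set of nonzero Apéry elements and $G=G(S)=(V,E)$. If $|X\cap D|=|E|$, then every edge $\{u,v\}$ of $G$ with $\{u,v\}\not\subseteq V\cap P$ is of the form $\{x,2x\}$ with $x\in V\cap P$, and $2x$ is a leaf of $G$ whose unique neighbor is $x$ (i.e. $N_G(2x)=\{x\}$).
   Context: A numerical semigroup is a subset $S\subseteq\mathbb N$ containing $0$, closed under addition, with finite complement; $S^*=S\setminus\{0\}$, $m=\min S^*$, $P=S^*\setminus D$. $X=\{s\in S^*: s-m\notin S\}$. The graph $G(S)$ has edge set $E$ consisting of all subsets $\{x,y\}\subseteq X$ ($x=y$ allowed) with $x+y\in X$, and vertex set $V$ the endvertices of these edges. $N_G(x)=\{y\in X: x+y\in X\}$. *)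

(* Defs.v *)
From mathcomp Require Import all_boot zify.
Set Implicit Arguments. Unset Strict Implicit. Unset Printing Implicit Defensive.

(* The finite complement is witnessed by an explicit bound
   [ns_bound] beyond which every natural number lies in S; all the notions
   below are independent of the particular witness chosen. *)
Record numsg := NumSg {
  ns_mem : pred nat;
  ns_0 : ns_mem 0;
  ns_add : forall a b, ns_mem a -> ns_mem b -> ns_mem (a + b);
  ns_bound : nat;
  ns_cofinite : forall n, ns_bound <= n -> ns_mem n
}.

Section Defs.
Variable S : numsg.

Definition Sstar (n : nat) : bool := (0 < n) && ns_mem S n.

Lemma Sstar_ex : exists n, Sstar n.
Proof.
exists (ns_bound S).+1; rewrite /Sstar /=; apply: ns_cofinite; exact: leqnSn.
Qed.

Definition mult : nat := ex_minn Sstar_ex.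

Definition inX (s : nat) : bool := Sstar s && ~~ ns_mem S (s - mult).

Definition inD (n : nat) : bool :=
  [exists a : 'I_n.+1, Sstar a && Sstar (n - a)].

(* P = S^* \ D  (the minimal generating set) *)
Definition inP (n : nat) : bool := Sstar n && ~~ inD n.

Definition isEdge (x y : nat) : bool := [&& inX x, inX y & inX (x + y)].

Definition inV (v : nat) : Prop := exists u, isEdge u v.

Definition inN (x y : nat) : bool := inX y && inX (x + y).

Definition Xbound : nat := ns_bound S + mult.

Lemma inX_lt x : inX x -> x < Xbound.
Proof.
rewrite /inX /Xbound => /andP [_ H].
rewrite ltnNge; apply/negP => Hle; move/negP: H; apply.
apply: ns_cofinite; lia.
Qed.

Definition card_XD : nat :=
  count (fun x => inX x && inD x) (iota 0 Xbound).

Definition card_E : nat :=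
  count (fun p : nat * nat => (p.1 <= p.2) && isEdge p.1 p.2)
        [seq (x, y) | x <- iota 0 Xbound, y <- iota 0 Xbound].

End Defs.

(* Main.v *)
Require Import Defs.
From mathcomp Require Import all_boot.
From mathcomp Require Import zify.
Set Implicit Arguments. Unset Strict Implicit.

Section Proof.
Variable S : numsg.

Lemma mult_min n : Sstar S n -> mult S <= n.
Proof. rewrite /mult; case: ex_minnP => m _ H; exact: H. Qed.

Lemma Sstar_pos n : Sstar S n -> 0 < n.
Proof. by case/andP. Qed.

Lemma KX w a b : inX S w -> w = a + b -> Sstar S a -> ns_mem S b -> inX S a.
Proof.
move=> /andP [_ Hw] Ew Ha Hb; subst w; rewrite /inX Ha /=.
apply/negP => Ham; move/negP: Hw; apply.
have Hm := mult_min Ha.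
have -> : a + b - mult S = (a - mult S) + b by lia.
exact: ns_add.
Qed.

Lemma inX_Sstar x : inX S x -> Sstar S x.
Proof. by case/andP. Qed.

Lemma isEdgeC a b : isEdge S a b = isEdge S b a.
Proof. by rewrite /isEdge addnC; do 2!case: (inX S _). Qed.

Lemma uniq_map_inj (T1 T2 : eqType) (f : T1 -> T2) (s : seq T1) :
  uniq (map f s) -> {in s &, injective f}.
Proof.
elim: s => [|x s IH] //= /andP [Hx Hu] y z.
rewrite !in_cons => /orP [/eqP -> | Hy] /orP [/eqP -> | Hz] //.
- move=> E; move/negP: Hx; case; rewrite E; exact: map_f.
- move=> E; move/negP: Hx; case; rewrite -E; exact: map_f.
- exact: IH.
Qed.

Definition pairs := [seq (x, y) | x <- iota 0 (Xbound S), y <- iota 0 (Xbound S)].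
Definition Epred (p : nat * nat) := (p.1 <= p.2) && isEdge S p.1 p.2.
Definition L := filter Epred pairs.

Lemma inL a b : isEdge S a b -> (minn a b, maxn a b) \in L.
Proof.
move=> H; rewrite mem_filter /Epred /=.
have H' : isEdge S (minn a b) (maxn a b).
  by case: (leqP a b) => _ //; rewrite isEdgeC.
rewrite H' geq_min leq_maxr /=.
move: H' => /and3P [H1 H2 _].
rewrite /pairs orbT; apply/andP; split => //.
apply: (allpairs_f pair); rewrite mem_iota add0n; exact: inX_lt.
Qed.

Lemma XD_sub w : inX S w && inD S w -> w \in map (fun p => p.1 + p.2) L.
Proof.
move=> /andP [Hw /existsP [a /andP [Ha Hb]]].
have Hle : a <= w by have := ltn_ord a; lia.
have Ew : w = a + (w - a) by lia.
have Xa : inX S a by apply: (KX Hw Ew Ha); case/andP: Hb.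
have Xb : inX S (w - a).
  by apply: (KX (b := a) Hw _ Hb); [lia | case/andP: Ha].
have He : isEdge S a (w - a) by rewrite /isEdge Xa Xb -Ew Hw.
have := inL He => HL.
have -> : w = (minn a (w - a)) + (maxn a (w - a)) by rewrite addn_min_max; lia.
exact: (map_f (fun p : nat * nat => p.1 + p.2) HL).
Qed.

Lemma uniq_sums : card_XD S = card_E S -> uniq (map (fun p => p.1 + p.2) L).
Proof.
move=> Hc.
set M := map _ L.
apply: (leq_size_uniq (s1 := undup M)); first exact: undup_uniq.
  by move=> x; rewrite mem_undup.
rewrite size_map.
have -> : size L = card_E S by rewrite size_filter.
rewrite -Hc /card_XD -size_filter.
apply: uniq_leq_size; first by apply: filter_uniq; exact: iota_uniq.
move=> x; rewrite mem_filter mem_undup => /andP [H _]; exact: XD_sub.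
Qed.

Lemma unique_rep a b c d : card_XD S = card_E S ->
  isEdge S a b -> isEdge S c d -> a + b = c + d ->
  (a = c /\ b = d) \/ (a = d /\ b = c).
Proof.
move=> Hc H1 H2 E.
have Hinj := uniq_map_inj (uniq_sums Hc) (inL H1) (inL H2).
have : (minn a b, maxn a b) = (minn c d, maxn c d).
  apply: Hinj => /=; rewrite !addn_min_max; lia.
case=> E1 E2; lia.
Qed.

Lemma M1 u v : card_XD S = card_E S -> isEdge S u v -> inD S u -> u = 2 * v.
Proof.
move=> Hc He /existsP [[a Hau] /= /andP [Ha Hb]].
have Hle : a <= u by clear -Hau; lia.
move Ebd : (u - a) Hb => b Hb.
have Eu : u = a + b by clear -Ebd Hle; lia.
subst u.
move: (He) => /and3P [Xu Xv Xuv].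
have Ea : a + b + v = a + (b + v) by rewrite addnA.
have Eb : a + b + v = b + (a + v) by clear; lia.
have Sb : ns_mem S b by case/andP: Hb.
have Sa : ns_mem S a by case/andP: Ha.
have Sv : ns_mem S v by case/andP: (inX_Sstar Xv).
have Xa : inX S a by apply: (KX Xuv Ea Ha); exact: ns_add.
have Xb : inX S b by apply: (KX Xuv Eb Hb); exact: ns_add.
have pa := Sstar_pos Ha; have pb := Sstar_pos Hb.
have Sbv : Sstar S (b + v).
  by rewrite /Sstar ns_add // andbT addn_gt0 pb.
have Sav : Sstar S (a + v).
  by rewrite /Sstar ns_add // andbT addn_gt0 pa.
have Xbv : inX S (b + v).
  by apply: (KX (b := a) Xuv _ Sbv Sa); clear; lia.
have Xav : inX S (a + v).
  by apply: (KX (b := b) Xuv _ Sav Sb); clear; lia.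
have E1 : isEdge S a (b + v) by rewrite /isEdge Xa Xbv -Ea Xuv.
have E2 : isEdge S b (a + v) by rewrite /isEdge Xb Xav -Eb Xuv.
have := unique_rep Hc He E1 Ea; have := unique_rep Hc He E2 Eb.
clear -pa pb; lia.
Qed.

Lemma M2 u v : card_XD S = card_E S -> isEdge S u v -> inD S u -> inP S v.
Proof.
move=> Hc He Hd; case/and3P: (He) => Xu Xv _.
rewrite /inP (inX_Sstar Xv) andTb.
apply/negP => Hv.
have E1 := M1 Hc He Hd.
have E2 := M1 Hc (etrans (isEdgeC v u) He) Hv.
have pu := Sstar_pos (inX_Sstar Xu).
clear -E1 E2 pu; lia.
Qed.

Lemma inD_double x : Sstar S x -> inD S (2 * x).
Proof.
move=> Hx; apply/existsP; exists (inord x).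
rewrite inordK; last lia.
have -> : 2 * x - x = x by clear; lia.
by rewrite Hx.
Qed.

Lemma main_case u v : card_XD S = card_E S -> isEdge S u v -> inD S u ->
  [/\ inV S v, inP S v, u = 2 * v
      & forall y : nat, inN S (2 * v) y <-> y = v].
Proof.
move=> Hc He Hd.
have E := M1 Hc He Hd.
split => //; first by exists u.
  exact: M2 Hc He Hd.
move=> y; split.
- move=> /andP [Xy Xs].
  have He' : isEdge S (2 * v) y by rewrite /isEdge Xy Xs -E (proj1 (andP He)).
  have Hv : Sstar S v by apply: inX_Sstar; case/and3P: He.
  have := M1 Hc He' (inD_double Hv); clear; lia.
- move=> ->; case/and3P: He => _ Xv Xuv.
  by rewrite /inN Xv -E.
Qed.

End Proof.

Theorem proposition4p17 (S : numsg) :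
  card_XD S = card_E S ->
  forall u v : nat, isEdge S u v ->
  ~ (inV S u /\ inP S u /\ inV S v /\ inP S v) ->
  exists x : nat,
    [/\ inV S x, inP S x,
        (u = x /\ v = 2 * x) \/ (u = 2 * x /\ v = x)
      & forall y : nat, inN S (2 * x) y <-> y = x].
Proof.
move=> Hc u v He Hn.
have Vu : inV S u by exists v; rewrite isEdgeC.
have Vv : inV S v by exists u.
case: (boolP (inD S u)) => Du.
  case: (main_case Hc He Du) => H1 H2 H3 H4.
  by exists v; split => //; right.
case: (boolP (inD S v)) => Dv.
  case: (main_case Hc (etrans (@isEdgeC S v u) He) Dv) => H1 H2 H3 H4.
  by exists u; split => //; left.
exfalso; apply: Hn; split => //; split; last split => //.
- by rewrite /inP Du andbT; apply: inX_Sstar; case/and3P: He.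
- by rewrite /inP Dv andbT; apply: inX_Sstar; case/and3P: He.
Qed.
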